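(* Suppose $\theta_t$ is time-varying and $\mathbb{S}_\theta=\{\theta\in\mathbb{R}^{d_\theta}:[\theta]_k\ge0\ \forall k,\ \sum_k[\theta]_k=1\}$. Then the system $x_{t+1}=A_t(\theta_t)x_t+B_t(\theta_t)u_t$ is time-varying SMP in each of the following cases: (a) $v_t(\theta_t)=\sum_{k=1}^{d_\theta}[\theta_t]_kv^{(k)}$ with deterministic vectors $v^{(k)}$, the conditional expectation $\mathrm{E}[v_tv_t^\top|\theta_\bullet]$ being taken as the deterministic value $v_tv_t^\top$: with $N=d_\theta^2$, $\phi(\theta_t)=\mathrm{vec}(\theta_t\theta_t^\top)$, $M^{(d_\theta(k'-1)+k)}=\tfrac12(v^{(k)}v^{(k')\top}+v^{(k')}v^{(k)\top})$; (b) $v_t(\theta_t)=\sum_{k=1}^{d_\theta}[\theta_t]_kv_t^{(k)}$ with random vertices $v_t^{(k)}$ i.i.d. with respect to $t$ and independent of the parameters: with $N=d_\theta^2$, $\phi(\theta_t)=\mathrm{vec}(\theta_t\theta_t^\top)$, $M^{(d_\theta(k'-1)+k)}=\tfrac12\mathrm{E}[v_t^{(k)}v_t^{(k')\top}+v_t^{(k')}v_t^{(k)\top}]$; (c) $\mathrm{E}[v_t(\theta_t)|\theta_\bullet]=\sum_k[\theta_t]_k\mu^{(k)}$ and $\mathrm{Cov}[v_t(\theta_t)|\theta_\bullet]=\sum_k[\theta_t]_k\Sigma^{(k)}$ with deterministic $\mu^{(k)}$ and symmetric $\Sigma^{(k)}$: with $N=d_\theta^2$, $\phi(\theta_t)=\mathrm{vec}(\theta_t\theta_t^\top)$,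 $M^{(d_\theta(k'-1)+k)}=\tfrac12(\mu^{(k)}\mu^{(k')\top}+\mu^{(k')}\mu^{(k)\top})+\Sigma^{(k)}$.
   Context: System $x_{t+1}=A_t(\theta_t)x_t+B_t(\theta_t)u_t$ with $x_t\in\mathbb{R}^n$, $u_t\in\mathbb{R}^m$, uncertain $\theta_t\in\mathbb{S}_\theta\subset\mathbb{R}^{d_\theta}$, random $v_t(\theta_t):=\mathrm{vec}([A_t(\theta_t),B_t(\theta_t)])\in\mathbb{R}^{n(n+m)}$ ($\mathrm{vec}$ stacks columns) with conditional density $p(v_t\mid\theta_t)$, independent over $t$; $\mathrm{E}[\cdot|\theta_\bullet]$, $\mathrm{Cov}[\cdot|\theta_\bullet]$ are conditional on the parameter sequence $(\theta_0,\theta_1,\dots)$. $\mathbb{P}_N:=\{\varphi\in\mathbb{R}^N:\varphi_k\ge0,\sum\varphi_k=1\}$. SMP: there exist $N$, symmetric $M^{(1)},\dots,M^{(N)}$ and $\phi:\mathbb{S}_\theta\to\mathbb{P}_N$ with $\mathrm{E}[v_tv_t^\top|\theta_\bullet]=\sum_k[\phi(\theta_t)]_kM^{(k)}$ for all $t$ and all parameter sequences in $\mathbb{S}_\theta$; time-varying (TV) SMP if the parameters are allowed to vary with $t$. *)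

(* Defs.v *)
From HB Require Import structures.
From mathcomp Require Import all_boot all_order all_algebra.
From mathcomp Require Import all_classical all_reals all_analysis.
Set Implicit Arguments. Unset Strict Implicit. Unset Printing Implicit Defensive.
Import Order.TTheory GRing.Theory Num.Theory.
Local Open Scope ring_scope.

(* vec: column stacking.  For A : 'M_(p,q), vecc A : 'cV_(q*p) and
   (vecc A) (mxvec_index j i) 0 = A i j, i.e. entry (i,j) sits at
   0-based position q... = j*p + i (columns stacked). *)
Definition vecc (R : Type) (p q : nat) (A : 'M[R]_(p, q)) : 'cV[R]_(q * p) :=
  (mxvec A^T)^T.

Definition simplex (R : numDomainType) (N : nat) (phi : 'cV[R]_N) : Prop :=
  (forall k, 0 <= phi k 0) /\ \sum_(k < N) phi k 0 = 1.

Definition Emx (R : realType) (d : measure_display) (T : measurableType d)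
  (P : probability T R) (p q : nat) (X : T -> 'M[R]_(p, q)) : 'M[R]_(p, q) :=
  \matrix_(i, j) fine ('E_P[fun w => X w i j])%E.

Definition Covmx (R : realType) (d : measure_display) (T : measurableType d)
  (P : probability T R) (p : nat) (X : T -> 'cV[R]_p) : 'M[R]_p :=
  Emx P (fun w => (X w - Emx P X) *m (X w - Emx P X)^T).

Definition integrable_mx (R : realType) (d : measure_display) (T : measurableType d)
  (P : probability T R) (p q : nat) (X : T -> 'M[R]_(p, q)) : Prop :=
  forall i j, P.-integrable setT (EFin \o (fun w => X w i j)).

Definition sysv (R : Type) (T : Type) (n m dth : nat)
  (A : (nat -> 'cV[R]_dth) -> nat -> T -> 'M[R]_n)
  (B : (nat -> 'cV[R]_dth) -> nat -> T -> 'M[R]_(n, m))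
  (thetas : nat -> 'cV[R]_dth) (t : nat) (w : T) : 'cV[R]_((n + m) * n) :=
  vecc (row_mx (A thetas t w) (B thetas t w)).

(* Time-varying SMP with explicit witnesses N, M, phi:
   M^(k) symmetric, phi maps S_theta into P_N, and for every parameter
   sequence in S_theta and every t,
   E[v_t v_t^T | theta_bullet] = sum_k [phi(theta_t)]_k M^(k). *)
Definition TV_SMP_with (R : realType) (d : measure_display) (T : measurableType d)
  (P : probability T R) (dth D : nat)
  (v : (nat -> 'cV[R]_dth) -> nat -> T -> 'cV[R]_D)
  (N : nat) (M : 'I_N -> 'M[R]_D) (phi : 'cV[R]_dth -> 'cV[R]_N) : Prop :=
  [/\ forall k, (M k)^T = M k,
      forall th, simplex th -> simplex (phi th) &
      forall thetas : nat -> 'cV[R]_dth, (forall t, simplex (thetas t)) ->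
        forall t, Emx P (fun w => v thetas t w *m (v thetas t w)^T)
                  = \sum_(k < N) phi (thetas t) k 0 *: M k].

Definition TV_SMP (R : realType) (d : measure_display) (T : measurableType d)
  (P : probability T R) (dth D : nat)
  (v : (nat -> 'cV[R]_dth) -> nat -> T -> 'cV[R]_D) : Prop :=
  exists N (M : 'I_N -> 'M[R]_D) (phi : 'cV[R]_dth -> 'cV[R]_N),
    TV_SMP_with P v M phi.

Definition phi_outer (R : comPzRingType) (dth : nat) (th : 'cV[R]_dth)
  : 'cV[R]_(dth * dth) := vecc (th *m th^T).

(* Main.v *)
Require Import Defs.
From HB Require Import structures.
From mathcomp Require Import all_boot all_order all_algebra.
From mathcomp Require Import all_classical all_reals all_analysis.
From mathcomp Require Import ring.
Import Order.TTheory GRing.Theory Num.Theory.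
Local Open Scope ring_scope.
Set Implicit Arguments. Unset Strict Implicit.

Section S.
Context (R : realType) (d : measure_display) (T : measurableType d) (P : probability T R).

Definition Int (f : T -> R) := P.-integrable setT (EFin \o f).
Definition E (f : T -> R) : R := fine ('E_P[f])%E.

Lemma EE f : E f = Rintegral P setT f.
Proof. by rewrite /E unlock. Qed.

Lemma Int_cst c : Int (fun _ => c).
Proof. exact: (finite_measure_integrable_cst P c measurableT). Qed.

Lemma Int_sum_seq (I : Type) (s : seq I) (c : I -> R) (f : I -> T -> R) :
  (forall i, Int (f i)) -> Int (fun w => \sum_(i <- s) c i * f i w).
Proof.
move=> H; rewrite /Int.
have -> : EFin \o (fun w => \sum_(i <- s) c i * f i w) = (fun w => \sum_(i <- s) (c i)%:E * (f i w)%:E)%E.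
  by apply/funext => w /=; rewrite -sumEFin; apply: eq_bigr => i _; rewrite EFinM.
apply: integrable_sum => // i _; exact: integrableZl (H i).
Qed.

Lemma Int_sum (I : finType) (c : I -> R) (f : I -> T -> R) :
  (forall i, Int (f i)) -> Int (fun w => \sum_i c i * f i w).
Proof. exact: Int_sum_seq. Qed.

Lemma Int_add f g : Int f -> Int g -> Int (fun w => f w + g w).
Proof.
move=> Hf Hg; rewrite /Int (_ : _ \o _ = (EFin \o f) \+ (EFin \o g))%E; first exact: integrableD.
by apply/funext => x. Qed.

Lemma Int_scale c f : Int f -> Int (fun w => c * f w).
Proof.
move=> H; rewrite /Int (_ : _ \o _ = (fun x => c%:E * (f x)%:E)%E); first exact: integrableZl.
by apply/funext => x /=; rewrite EFinM.
Qed.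

Lemma E_cst c : E (fun _ => c) = c.
Proof. by rewrite /E (_ : (fun _ => c) = cst c)// expectation_cst. Qed.

Lemma E_add f g : Int f -> Int g -> E (fun w => f w + g w) = E f + E g.
Proof. by move=> ? ?; rewrite !EE RintegralD. Qed.

Lemma E_scale c f : Int f -> E (fun w => c * f w) = c * E f.
Proof. by move=> ?; rewrite !EE RintegralZl. Qed.

Lemma E_ext f g : (forall w, f w = g w) -> E f = E g.
Proof. by move=> H; congr E; apply/funext. Qed.

Lemma E_sum_seq (I : Type) (s : seq I) (c : I -> R) (f : I -> T -> R) :
  (forall i, Int (f i)) -> E (fun w => \sum_(i <- s) c i * f i w) = \sum_(i <- s) c i * E (f i).
Proof.
move=> H; elim: s => [|i s IH].
  by rewrite big_nil (@E_ext _ (fun _ => 0)) ?E_cst // => w; rewrite big_nil.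
rewrite big_cons -E_scale // -IH -E_add; first by apply: E_ext => w; rewrite big_cons.
  exact: Int_scale.
exact: Int_sum_seq.
Qed.

Lemma E_sum (I : finType) (c : I -> R) (f : I -> T -> R) :
  (forall i, Int (f i)) -> E (fun w => \sum_i c i * f i w) = \sum_i c i * E (f i).
Proof. exact: E_sum_seq. Qed.

Lemma EmxE p q (X : T -> 'M[R]_(p,q)) i j : Emx P X i j = E (fun w => X w i j).
Proof. by rewrite /Emx mxE. Qed.

Lemma Emx_ext p q (X Y : T -> 'M[R]_(p,q)) : (forall w, X w = Y w) -> Emx P X = Emx P Y.
Proof. by move=> H; congr Emx; apply/funext. Qed.

Lemma Emx_cst p q (C : 'M[R]_(p,q)) : Emx P (fun _ => C) = C.
Proof. by apply/matrixP => i j; rewrite EmxE E_cst. Qed.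

Lemma Emx_tr p q (X : T -> 'M[R]_(p,q)) : (Emx P X)^T = Emx P (fun w => (X w)^T).
Proof. by apply/matrixP => i j; rewrite mxE !EmxE; apply: E_ext => w; rewrite mxE. Qed.

Lemma Emx_sum (I : finType) p q (c : I -> R) (X : I -> T -> 'M[R]_(p,q)) :
  (forall i, integrable_mx P (X i)) ->
  Emx P (fun w => \sum_i c i *: X i w) = \sum_i c i *: Emx P (X i).
Proof.
move=> H; apply/matrixP => a b; rewrite EmxE summxE.
rewrite (@E_ext _ (fun w => \sum_i c i * X i w a b)); last first.
  by move=> w; rewrite summxE; apply: eq_bigr => i _; rewrite mxE.
rewrite E_sum; last by move=> i; exact: H.
by apply: eq_bigr => i _; rewrite mxE EmxE.
Qed.

Lemma intmx_sum (I : finType) p q (c : I -> R) (X : I -> T -> 'M[R]_(p,q)) :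
  (forall i, integrable_mx P (X i)) ->
  integrable_mx P (fun w => \sum_i c i *: X i w).
Proof.
move=> H a b.
rewrite (_ : (fun w => (\sum_i c i *: X i w) a b) = (fun w => \sum_i c i * X i w a b)).
  exact: (@Int_sum _ c (fun i w => X i w a b) (fun i => H i a b)).
by apply/funext => w; rewrite summxE; apply: eq_bigr => i _; rewrite mxE.
Qed.

Lemma Emx_add p q (X Y : T -> 'M[R]_(p,q)) :
  integrable_mx P X -> integrable_mx P Y ->
  Emx P (fun w => X w + Y w) = Emx P X + Emx P Y.
Proof.
move=> HX HY; apply/matrixP => a b.
transitivity (E (fun w => X w a b + Y w a b)).
  by rewrite EmxE; apply: E_ext => w; rewrite mxE.
by rewrite E_add; [rewrite [RHS]mxE !EmxE | exact: HX | exact: HY].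
Qed.
End S.

Section Alg.
Context (R : comPzRingType).

Lemma trZ p q (c : R) (B : 'M[R]_(p,q)) : (c *: B)^T = c *: B^T.
Proof. by apply/matrixP => i j; rewrite !mxE. Qed.

Lemma trS (I : finType) p q (F : I -> 'M[R]_(p,q)) : (\sum_i F i)^T = \sum_i (F i)^T.
Proof. by apply/matrixP => i j; rewrite !mxE !summxE; apply: eq_bigr => k _; rewrite mxE. Qed.

Lemma trD p q (B C : 'M[R]_(p,q)) : (B + C)^T = B^T + C^T.
Proof. by apply/matrixP => i j; rewrite !mxE. Qed.

Lemma outer_sum (dth D : nat) (a : 'I_dth -> R) (x : 'I_dth -> 'cV[R]_D) :
  (\sum_k a k *: x k) *m (\sum_k a k *: x k)^T
  = \sum_k \sum_k' (a k * a k') *: (x k *m (x k')^T).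
Proof.
rewrite mulmx_suml; apply: eq_bigr => k _.
rewrite trS mulmx_sumr; apply: eq_bigr => k' _.
by rewrite trZ -scalemxAl -scalemxAr scalerA.
Qed.

Lemma phi_outerE (dth : nat) (th : 'cV[R]_dth) k k' :
  phi_outer th (mxvec_index k' k) 0 = th k 0 * th k' 0.
Proof.
by rewrite /phi_outer /vecc mxE mxvecE !mxE big_ord1 mxE.
Qed.

Lemma sum_phi (dth D : nat) (th : 'cV[R]_dth) (M : 'I_(dth * dth) -> 'M[R]_D) :
  \sum_(i < dth * dth) phi_outer th i 0 *: M i
  = \sum_k \sum_k' (th k 0 * th k' 0) *: M (mxvec_index k' k).
Proof.
rewrite (reindex _ (curry_mxvec_bij _ _)) /= exchange_big pair_bigA /=.
by apply: eq_bigr => [[k' k]] _ /=; rewrite phi_outerE.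
Qed.
End Alg.

Lemma symsum (R : numFieldType) (dth D : nat) (a : 'I_dth -> R) (G : 'I_dth -> 'I_dth -> 'M[R]_D) :
  \sum_k \sum_k' (a k * a k') *: (2^-1 *: (G k k' + G k' k))
  = \sum_k \sum_k' (a k * a k') *: G k k'.
Proof.
have H : \sum_k \sum_k' (a k * a k') *: G k' k = \sum_k \sum_k' (a k * a k') *: G k k'.
  by rewrite exchange_big; apply: eq_bigr => k _; apply: eq_bigr => k' _; rewrite mulrC.
transitivity (2^-1 *: (\sum_k \sum_k' (a k * a k') *: G k k' + \sum_k \sum_k' (a k * a k') *: G k' k)).
  rewrite -big_split scaler_sumr; apply: eq_bigr => k _.
  rewrite -big_split scaler_sumr; apply: eq_bigr => k' _.
  by rewrite !scalerDr !scalerA mulrC.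
rewrite H -mulr2n -scaler_nat scalerA mulVf ?scale1r //.
Qed.

Section S2.
Context (R : realType) (d : measure_display) (T : measurableType d) (P : probability T R).

Lemma Emx_second p (v : T -> 'cV[R]_p) :
  integrable_mx P v -> integrable_mx P (fun w => v w *m (v w)^T) ->
  Emx P (fun w => v w *m (v w)^T) = Covmx P v + Emx P v *m (Emx P v)^T.
Proof.
move=> Hv Hvv; apply/matrixP => i j.
have Ivv : Int P (fun w => v w i 0 * v w j 0).
  rewrite /Int (_ : (fun w => v w i 0 * v w j 0) = (fun w => (v w *m (v w)^T) i j)); first exact: Hvv.
  by apply/funext => w /=; rewrite mxE big_ord1 mxE.
rewrite [in RHS]mxE /Covmx !EmxE [in RHS]mxE big_ord1 [X in _ * X]mxE !EmxE.
set mi := E P (fun w => v w i 0); set mj := E P (fun w => v w j 0).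
rewrite (@E_ext _ _ _ P _ (fun w => v w i 0 * v w j 0)); last first.
  by move=> w; rewrite mxE big_ord1 mxE.
rewrite [X in _ = X + _](@E_ext _ _ _ P _ (fun w => (v w i 0 * v w j 0 + (- mj) * v w i 0) + ((- mi) * v w j 0 + mi * mj))); last first.
  move=> w; rewrite mxE big_ord1 !mxE /mi /mj /E; ring.
rewrite (@E_add _ _ _ P (fun w => v w i 0 * v w j 0 + - mj * v w i 0) (fun w => - mi * v w j 0 + mi * mj)); last 2 first.
- by apply: Int_add => //; apply: Int_scale; exact: Hv.
- by apply: Int_add; [apply: Int_scale; exact: Hv | exact: Int_cst].
rewrite (@E_add _ _ _ P (fun w => v w i 0 * v w j 0) (fun w => - mj * v w i 0)) //; last by apply: Int_scale; exact: Hv.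
rewrite (@E_add _ _ _ P (fun w => - mi * v w j 0) (fun w => mi * mj)); last 2 first.
- by apply: Int_scale; exact: Hv.
- exact: Int_cst.
rewrite (@E_scale _ _ _ P (- mj)); last exact: Hv.
rewrite (@E_scale _ _ _ P (- mi)); last exact: Hv.
rewrite E_cst -/mi -/mj; ring.
Qed.
End S2.

Lemma simplex_outer (R : realType) dth (th : 'cV[R]_dth) : simplex th -> simplex (phi_outer th).
Proof.
move=> [H0 H1]; split.
  by move=> i; case/mxvec_indexP: i => k' k; rewrite phi_outerE mulr_ge0.
rewrite (reindex _ (curry_mxvec_bij _ _)) /=.
transitivity (\sum_(k < dth) \sum_(k' < dth) phi_outer th (mxvec_index k k') 0).
  by rewrite pair_bigA; apply: eq_bigr => [[k k']].
rewrite -[RHS]H1; apply: eq_bigr => k _.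
under eq_bigr do rewrite phi_outerE.
by rewrite -big_distrl /= H1 mul1r.
Qed.

Unset Implicit Arguments.
Theorem corollary3 (R : realType) (d : measure_display) (T : measurableType d)
  (P : probability T R) (n m dth : nat)
  (A : (nat -> 'cV[R]_dth) -> nat -> T -> 'M[R]_n)
  (B : (nat -> 'cV[R]_dth) -> nat -> T -> 'M[R]_(n, m)) :
  (* (a) deterministic vertices *)
  (forall (vk : 'I_dth -> 'cV[R]_((n + m) * n))
          (M : 'I_(dth * dth) -> 'M[R]_((n + m) * n)),
     (forall thetas, (forall t, simplex (thetas t)) -> forall t w,
        sysv A B thetas t w = \sum_(k < dth) thetas t k 0 *: vk k) ->
     (forall k k' : 'I_dth, M (mxvec_index k' k)
        = 2^-1 *: (vk k *m (vk k')^T + vk k' *m (vk k)^T)) ->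
     TV_SMP_with P (sysv A B) M (@phi_outer R dth)) /\
  (* (b) random vertices, identically distributed in t, independent of the parameters *)
  (forall (vk : nat -> 'I_dth -> T -> 'cV[R]_((n + m) * n))
          (M : 'I_(dth * dth) -> 'M[R]_((n + m) * n)),
     (forall thetas, (forall t, simplex (thetas t)) -> forall t w,
        sysv A B thetas t w = \sum_(k < dth) thetas t k 0 *: vk t k w) ->
     (forall t k k', integrable_mx P (fun w => vk t k w *m (vk t k' w)^T)) ->
     (forall t k k', Emx P (fun w => vk t k w *m (vk t k' w)^T)
                   = Emx P (fun w => vk 0%N k w *m (vk 0%N k' w)^T)) ->
     (forall k k' : 'I_dth, M (mxvec_index k' k)
        = 2^-1 *: Emx P (fun w => vk 0%N k w *m (vk 0%N k' w)^T
                                 + vk 0%N k' w *m (vk 0%N k w)^T)) ->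
     TV_SMP_with P (sysv A B) M (@phi_outer R dth)) /\
  (* (c) affine conditional mean and covariance *)
  (forall (mu : 'I_dth -> 'cV[R]_((n + m) * n))
          (Sig : 'I_dth -> 'M[R]_((n + m) * n))
          (M : 'I_(dth * dth) -> 'M[R]_((n + m) * n)),
     (forall k, (Sig k)^T = Sig k) ->
     (forall thetas, (forall t, simplex (thetas t)) -> forall t,
        integrable_mx P (sysv A B thetas t) /\
        integrable_mx P (fun w => sysv A B thetas t w *m (sysv A B thetas t w)^T)) ->
     (forall thetas, (forall t, simplex (thetas t)) -> forall t,
        Emx P (sysv A B thetas t) = \sum_(k < dth) thetas t k 0 *: mu k) ->
     (forall thetas, (forall t, simplex (thetas t)) -> forall t,
        Covmx P (sysv A B thetas t) = \sum_(k < dth) thetas t k 0 *: Sig k) ->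
     (forall k k' : 'I_dth, M (mxvec_index k' k)
        = 2^-1 *: (mu k *m (mu k')^T + mu k' *m (mu k)^T) + Sig k) ->
     TV_SMP_with P (sysv A B) M (@phi_outer R dth)).
Proof.
split; [|split].
- move=> vk M Hv HM; split.
  + by move=> i; case/mxvec_indexP: i => k' k; rewrite HM trZ trD !trmx_mul !trmxK addrC.
  + by move=> th; exact: simplex_outer.
  + move=> th Hth t.
    rewrite (@Emx_ext _ _ _ P _ _ _ (fun _ => (\sum_k th t k 0 *: vk k) *m (\sum_k th t k 0 *: vk k)^T)); last first.
      by move=> w; rewrite (Hv th Hth t w).
    rewrite Emx_cst outer_sum sum_phi.
    under [RHS]eq_bigr do under eq_bigr do rewrite HM.
    by rewrite (symsum (fun k => th t k 0) (fun k k' => vk k *m (vk k')^T)).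
- move=> vk M Hv Hint Hsame HM; split.
  + move=> i; case/mxvec_indexP: i => k' k; rewrite HM trZ Emx_tr; congr (_ *: _).
    by apply: Emx_ext => w; rewrite trD !trmx_mul !trmxK addrC.
  + by move=> th; exact: simplex_outer.
  + move=> th Hth t.
    rewrite (@Emx_ext _ _ _ P _ _ _ (fun w => \sum_(p : 'I_dth * 'I_dth) (th t p.1 0 * th t p.2 0) *: (vk t p.1 w *m (vk t p.2 w)^T))); last first.
      by move=> w; rewrite (Hv th Hth t w) outer_sum pair_big.
    rewrite Emx_sum; last by move=> [k k']; exact: Hint.
    rewrite sum_phi.
    have HM' : forall k k', M (mxvec_index k' k) = 2^-1 *: (Emx P (fun w => vk 0%N k w *m (vk 0%N k' w)^T) + Emx P (fun w => vk 0%N k' w *m (vk 0%N k w)^T)).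
      by move=> k k'; rewrite HM Emx_add //; exact: Hint.
    under [RHS]eq_bigr do under eq_bigr do rewrite HM'.
    rewrite (symsum (fun k => th t k 0) (fun k k' => Emx P (fun w => vk 0%N k w *m (vk 0%N k' w)^T))).
    by rewrite pair_big /=; apply: eq_bigr => [[k k']] _ /=; rewrite Hsame.
- move=> mu Sig M HSig Hint Hmean Hcov HM; split.
  + move=> i; case/mxvec_indexP: i => k' k.
    rewrite HM trD trZ trD !trmx_mul !trmxK HSig; congr (_ *: _ + _); exact: addrC.
  + by move=> th; exact: simplex_outer.
  + move=> th Hth t; have [Iv Ivv] := Hint th Hth t.
    rewrite Emx_second // Hcov // Hmean // outer_sum sum_phi.
    under [RHS]eq_bigr do under eq_bigr do rewrite HM scalerDr.
    under [RHS]eq_bigr do rewrite big_split /=.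
    rewrite big_split /= (symsum (fun k => th t k 0) (fun k k' => mu k *m (mu k')^T)) addrC.
    congr (_ + _); apply: eq_bigr => k _.
    rewrite -scaler_suml -mulr_sumr; case: (Hth t) => _ ->; by rewrite mulr1.
Qed.
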